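(* Let $p$ be a fixed odd prime. For every $\epsilon>0$ there exists $c>0$ such that for every $n$, if $f:\mathbb{F}_p^n\to[-1,1]$ satisfies $\|f\|_{U^2}\le c$, $a\in[-1,1]$ is a constant, and $g(x)=a+f(x)$ for every $x\in\mathbb{F}_p^n$, then $\bigl|\|g\|_{U^3}^8-(a^8+\|f\|_{U^3}^8)\bigr|\le\epsilon$.
   Context: For real-valued $f$ on $\mathbb{F}_p^n$ and $k\ge2$, $\|f\|_{U^k}^{2^k}=\mathbb{E}_{x,h_1,\dots,h_k\in\mathbb{F}_p^n}\prod_{\omega\in\{0,1\}^k}f(x+\omega_1h_1+\dots+\omega_kh_k)$ (uniform averages). *)

(* Defs.v *)
From HB Require Import structures.
From mathcomp Require Import all_boot all_order all_algebra.
From mathcomp Require Import reals.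
Set Implicit Arguments. Unset Strict Implicit. Unset Printing Implicit Defensive.
Import Order.TTheory GRing.Theory Num.Theory.
Local Open Scope ring_scope.

(* ||f||_{U^k}^{2^k} for f : F_p^n -> R, as the uniform average over
   x, h_1..h_k of prod_{w in {0,1}^k} f (x + sum_i w_i h_i). *)
Definition gowers_pow (R : realType) (p n k : nat) (f : 'rV['F_p]_n -> R) : R :=
  (\sum_(x : 'rV['F_p]_n) \sum_(h : {ffun 'I_k -> 'rV['F_p]_n})
      \prod_(w : {ffun 'I_k -> bool})
         f (x + \sum_(i < k) (if w i then h i else 0)))
  / (#|{: 'rV['F_p]_n}|%:R ^+ k.+1).

Definition gowers_U2 (R : realType) (p n : nat) (f : 'rV['F_p]_n -> R) : R :=
  Num.sqrt (Num.sqrt (gowers_pow 2 f)).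

(* Main.v *)
Require Import Defs.
From HB Require Import structures.
From mathcomp Require Import all_boot all_order all_algebra.
From mathcomp Require Import reals.
From mathcomp Require Import ring.
Import Order.TTheory GRing.Theory Num.Theory.
Local Open Scope ring_scope.

Set Implicit Arguments. Unset Strict Implicit.
Section Avg.
Variable R : realType.
Variable V : finZmodType.

Definition NN : R := #|{: V}|%:R.
Lemma NN_gt0 : 0 < NN.
Proof. by rewrite /NN ltr0n; apply/card_gt0P; exists 0. Qed.
Lemma NN_neq0 : NN != 0. Proof. by rewrite gt_eqF // NN_gt0. Qed.

Definition avg (F : V -> R) : R := (\sum_x F x) / NN.

Lemma avg_cst c : avg (fun _ => c) = c.
Proof. by rewrite /avg sumr_const -mulr_natr /NN mulfK // NN_neq0. Qed.

Lemma avgD F G : avg (fun x => F x + G x) = avg F + avg G.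
Proof. by rewrite /avg big_split /= mulrDl. Qed.

Lemma avgZ c F : avg (fun x => c * F x) = c * avg F.
Proof. by rewrite /avg -mulr_sumr mulrA. Qed.

Lemma avgZr c F : avg (fun x => F x * c) = avg F * c.
Proof. by rewrite /avg -mulr_suml mulrAC. Qed.

Lemma avgN F : avg (fun x => - F x) = - avg F.
Proof. by rewrite /avg sumrN mulNr. Qed.

Lemma eq_avg F G : (forall x, F x = G x) -> avg F = avg G.
Proof. by move=> h; rewrite /avg; congr (_ / _); apply: eq_bigr. Qed.

Lemma avg_le F G : (forall x, F x <= G x) -> avg F <= avg G.
Proof.
move=> h; rewrite /avg ler_pM2r ?invr_gt0 ?NN_gt0 //; exact: ler_sum.
Qed.

Lemma avg_ge0 F : (forall x, 0 <= F x) -> 0 <= avg F.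
Proof. by move=> h; rewrite -(avg_cst 0); apply: avg_le. Qed.

Lemma avg_norm F : `|avg F| <= avg (fun x => `|F x|).
Proof.
rewrite /avg normrM normfV (ger0_norm (ltW NN_gt0)).
by rewrite ler_pM2r ?invr_gt0 ?NN_gt0 // ler_norm_sum.
Qed.

Lemma avg_shift t F : avg (fun x => F (x + t)) = avg F.
Proof. by rewrite /avg [in RHS](reindex_inj (addIr t)). Qed.

Lemma avg_opp F : avg (fun x => F (- x)) = avg F.
Proof. by rewrite /avg [in RHS](reindex_inj oppr_inj). Qed.

Lemma avg_swap (F : V -> V -> R) :
  avg (fun x => avg (fun y => F x y)) = avg (fun y => avg (fun x => F x y)).
Proof.
rewrite /avg; congr (_ / _); rewrite -!mulr_suml; congr (_ * _).
exact: exchange_big.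
Qed.

Lemma avg_sq F : avg F ^+ 2 <= avg (fun x => F x ^+ 2).
Proof.
set m := avg F.
have h : 0 <= avg (fun x => (F x - m) ^+ 2) by apply: avg_ge0 => x; exact: sqr_ge0.
have e : avg (fun x => (F x - m) ^+ 2) =
  avg (fun x => F x ^+ 2) + (- (2 * m) * avg F + m ^+ 2).
  rewrite -avgZ -(avg_cst (m ^+ 2)) -avgD -avgD; apply: eq_avg => x; ring.
move: h; rewrite e -/m => h; rewrite -subr_ge0.
by have -> : avg (fun x => F x ^+ 2) - m ^+ 2 = avg (fun x => F x ^+ 2) + (- (2 * m) * m + m ^+ 2) by ring.
Qed.

Lemma avg_le1 F : (forall x, `|F x| <= 1) -> `|avg F| <= 1.
Proof.
move=> h; apply: le_trans (avg_norm F) _; rewrite -(avg_cst 1); exact: avg_le.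
Qed.

Lemma avg_sumdiv k (S : V -> R) : avg (fun x => S x / NN ^+ k) = (\sum_x S x) / NN ^+ k.+1.
Proof. by rewrite /avg -mulr_suml exprSr invfM mulrA. Qed.
Lemma avg1 (S : V -> R) : avg S = (\sum_x S x) / NN ^+ 1.
Proof. by rewrite expr1. Qed.
End Avg.
Arguments avg {R V}. Arguments NN {R V}.
Unset Implicit Arguments. Set Strict Implicit.

Section Ffun.
Variable T : finType.
Definition o0 : 'I_3 := @Ordinal 3 0 isT.
Definition o1 : 'I_3 := @Ordinal 3 1 isT.
Definition o2 : 'I_3 := @Ordinal 3 2 isT.
Definition p0 : 'I_2 := @Ordinal 2 0 isT.
Definition p1 : 'I_2 := @Ordinal 2 1 isT.
Definition mk3 (a b c : T) : {ffun 'I_3 -> T} :=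
  [ffun i : 'I_3 => if val i == 0%N then a else if val i == 1%N then b else c].
Definition mk2 (a b : T) : {ffun 'I_2 -> T} :=
  [ffun i : 'I_2 => if val i == 0%N then a else b].

Lemma mk3_eta (w : {ffun 'I_3 -> T}) : mk3 (w o0) (w o1) (w o2) = w.
Proof.
apply/ffunP => i; rewrite ffunE; case: i => [[|[|[|//]]] Hi] /=;
  congr (w _); exact: val_inj.
Qed.
Lemma mk2_eta (w : {ffun 'I_2 -> T}) : mk2 (w p0) (w p1) = w.
Proof.
apply/ffunP => i; rewrite ffunE; case: i => [[|[|//]] Hi] /=;
  congr (w _); exact: val_inj.
Qed.

Lemma big_ffun3 (Q : Type) (idx : Q) (op : Monoid.com_law idx) (F : {ffun 'I_3 -> T} -> Q) :
  \big[op/idx]_w F w = \big[op/idx]_a \big[op/idx]_b \big[op/idx]_c F (mk3 a b c).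
Proof.
under [RHS]eq_bigr do rewrite pair_big.
rewrite pair_big /=.
rewrite (reindex (fun q : T * (T * T) => mk3 q.1 q.2.1 q.2.2)) //.
exists (fun w : {ffun 'I_3 -> T} => (w o0, (w o1, w o2))) => [[a [b c]] _|w _] /=.
  by rewrite !ffunE.
exact: mk3_eta.
Qed.

Lemma big_ffun2 (Q : Type) (idx : Q) (op : Monoid.com_law idx) (F : {ffun 'I_2 -> T} -> Q) :
  \big[op/idx]_w F w = \big[op/idx]_a \big[op/idx]_b F (mk2 a b).
Proof.
rewrite pair_big /=.
rewrite (reindex (fun q : T * T => mk2 q.1 q.2)) //.
exists (fun w : {ffun 'I_2 -> T} => (w p0, w p1)) => [[a b] _|w _] /=.
  by rewrite !ffunE.
exact: mk2_eta.
Qed.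
End Ffun.
Arguments mk3 {T}. Arguments mk2 {T}.

Section G.
Variable R : realType.
Variables p n : nat.
Local Notation V := 'rV['F_p]_n.
Definition e (b : bool) (h : V) := if b then h else 0.

Lemma sum3 (b1 b2 b3 : bool) (h1 h2 h3 : V) :
  \sum_(i < 3) (if mk3 b1 b2 b3 i then mk3 h1 h2 h3 i else 0) = e b1 h1 + e b2 h2 + e b3 h3.
Proof. by rewrite !big_ord_recl big_ord0 !ffunE /= addr0 addrA. Qed.

Lemma sum2 (b1 b2 : bool) (h1 h2 : V) :
  \sum_(i < 2) (if mk2 b1 b2 i then mk2 h1 h2 i else 0) = e b1 h1 + e b2 h2.
Proof. by rewrite !big_ord_recl big_ord0 !ffunE /= addr0. Qed.

Lemma avg4 (F : V -> V -> V -> V -> R) :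
  avg (fun x => avg (fun a => avg (fun b => avg (fun c => F x a b c))))
  = (\sum_x \sum_a \sum_b \sum_c F x a b c) / (#|{: V}|%:R ^+ 4).
Proof.
under eq_avg => x do under eq_avg => a do under eq_avg => b do rewrite avg1.
under eq_avg => x do under eq_avg => a do rewrite avg_sumdiv.
under eq_avg => x do rewrite avg_sumdiv.
by rewrite avg_sumdiv.
Qed.

Lemma avg3 (F : V -> V -> V -> R) :
  avg (fun x => avg (fun a => avg (fun b => F x a b)))
  = (\sum_x \sum_a \sum_b F x a b) / (#|{: V}|%:R ^+ 3).
Proof.
under eq_avg => x do under eq_avg => a do rewrite avg1.
under eq_avg => x do rewrite avg_sumdiv.
by rewrite avg_sumdiv.
Qed.

Lemma gp3E (G : {ffun 'I_3 -> bool} -> V -> R) :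
  (\sum_x \sum_(h : {ffun 'I_3 -> V}) \prod_(w : {ffun 'I_3 -> bool})
      G w (x + \sum_(i < 3) (if w i then h i else 0))) / (#|{: V}|%:R ^+ 4)
  = avg (fun x => avg (fun h1 => avg (fun h2 => avg (fun h3 =>
      \prod_b3 \prod_b1 \prod_b2 G (mk3 b1 b2 b3) (x + e b1 h1 + e b2 h2 + e b3 h3))))).
Proof.
rewrite avg4; congr (_ / _); apply: eq_bigr => x _.
rewrite big_ffun3; do 3! (apply: eq_bigr => ? _).
rewrite big_ffun3; under eq_bigr do rewrite exchange_big.
rewrite exchange_big /=; do 3! (apply: eq_bigr => ? _).
by rewrite sum3 !addrA.
Qed.

Lemma gp2E (f : V -> R) :
  gowers_pow 2 f = avg (fun x => avg (fun h1 => avg (fun h2 =>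
      \prod_b1 \prod_b2 f (x + e b1 h1 + e b2 h2)))).
Proof.
rewrite avg3 /gowers_pow; congr (_ / _); apply: eq_bigr => x _.
rewrite big_ffun2; do 2! (apply: eq_bigr => ? _).
rewrite big_ffun2; do 2! (apply: eq_bigr => ? _).
by rewrite sum2 addrA.
Qed.
End G.
Arguments e {p n}.

Section C.
Variable R : realType.
Variables p n : nat.
Local Notation V := 'rV['F_p]_n.
Variable f : V -> R.
Hypothesis hf : forall x, `|f x| <= 1.
Variable a : R.
Hypothesis ha : `|a| <= 1.

Local Notation U := (gowers_pow 2 f).
Definition rr (z : V) := avg (fun w => f w * f (w + z)).
Definition mu := avg f.

Lemma U_expl : U = avg (fun x => avg (fun h1 => avg (fun h2 =>
   (f (x + h1 + h2) * f (x + h1)) * (f (x + h2) * f x)))).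
Proof.
rewrite gp2E; apply: eq_avg => x; apply: eq_avg => h1; apply: eq_avg => h2.
by rewrite !big_bool /= !addr0.
Qed.

Lemma U_rr : U = avg (fun z => rr z ^+ 2).
Proof.
rewrite U_expl avg_swap; apply: eq_avg => h1.
transitivity (avg (fun x => f x * f (x + h1) * rr h1)).
  apply: eq_avg => x.
  transitivity (avg (fun h2 => f x * f (x + h1) * (f (h2 + x + h1) * f (h2 + x)))).
    by apply: eq_avg => h2; rewrite (addrC h2 x) addrAC; ring.
  rewrite avgZ; congr (_ * _).
  rewrite (avg_shift x (fun y => f (y + h1) * f y)) /rr.
  by apply: eq_avg => y; rewrite mulrC.
by rewrite avgZr expr2.
Qed.

Lemma U_ge0 : 0 <= U.
Proof. rewrite U_rr; apply: avg_ge0 => z; exact: sqr_ge0. Qed.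

Lemma U_le1 : U <= 1.
Proof.
apply: le_trans (ler_norm _) _; rewrite U_expl.
apply: avg_le1 => x; apply: avg_le1 => h1; apply: avg_le1 => h2.
rewrite !normrM; apply: mulr_ile1; rewrite ?mulr_ge0 ?normr_ge0 //;
  apply: mulr_ile1; rewrite ?normr_ge0 //.
Qed.

Lemma avg_rr : avg rr = mu ^+ 2.
Proof.
rewrite /rr avg_swap expr2 /mu -avgZr; apply: eq_avg => w.
rewrite avgZ; congr (_ * _).
by rewrite -(avg_shift w f); apply: eq_avg => z; rewrite addrC.
Qed.

Lemma mu_sq : mu ^+ 2 <= Num.sqrt U.
Proof.
have h : (mu ^+ 2) ^+ 2 <= U by rewrite -avg_rr U_rr; exact: avg_sq.
rewrite -(ger0_norm (sqr_ge0 mu)) -sqrtr_sqr; exact: ler_wsqrtr.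
Qed.

Lemma U_le_sqrt : U <= Num.sqrt U.
Proof.
have h0 := U_ge0; have h1 := U_le1.
rewrite -{1}(sqr_sqrtr h0) expr2.
have s0 := sqrtr_ge0 U.
have s1 : Num.sqrt U <= 1 by rewrite -sqrtr1; exact: ler_wsqrtr.
by rewrite ler_piMl.
Qed.

Lemma eqle (x y : R) : x = y -> x <= y. Proof. by move->. Qed.

Definition phi (b : bool) : V -> R := if b then f else (fun _ => a).
Definition Bg (F00 F10 F01 F11 : V -> R) (h1 h2 : V) :=
  avg (fun y => F00 y * F10 (y + h1) * F01 (y + h2) * F11 (y + h1 + h2)).
Definition Qf F00 F10 F01 F11 :=
  avg (fun h1 => avg (fun h2 => Bg F00 F10 F01 F11 h1 h2 ^+ 2)).

Lemma Sym1 A B C D : Qf A B C D = Qf A C B D.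
Proof.
rewrite /Qf avg_swap; apply: eq_avg => u; apply: eq_avg => v.
congr (_ ^+ 2); apply: eq_avg => y; rewrite (addrAC y v u); ring.
Qed.

Lemma BgN A B C D h1 h2 : Bg A B C D (- h1) h2 = Bg B A D C h1 h2.
Proof.
rewrite /Bg -(avg_shift h1); apply: eq_avg => y.
rewrite addrK; ring.
Qed.

Lemma Sym2 A B C D : Qf A B C D = Qf B A D C.
Proof.
rewrite /Qf -[in LHS]avg_opp; apply: eq_avg => h1; apply: eq_avg => h2.
by rewrite BgN.
Qed.

Lemma Q_scale (c : R) (B G : V -> V -> R) : `|c| <= 1 ->
  (forall h1 h2, B h1 h2 = c * G h1 h2) ->
  avg (fun h1 => avg (fun h2 => B h1 h2 ^+ 2)) <= avg (fun h1 => avg (fun h2 => G h1 h2 ^+ 2)).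
Proof.
move=> hc hB; apply: avg_le => h1; apply: avg_le => h2.
rewrite hB exprMn -(real_normK (num_real c)); apply: ler_piMl; first exact: sqr_ge0.
by apply: exprn_ile1.
Qed.

Lemma a3 : `|a * a * a| <= 1.
Proof. by rewrite !normrM; do 2! (apply: mulr_ile1 => //; rewrite ?mulr_ge0 //). Qed.
Lemma a2 : `|a * a| <= 1.
Proof. by rewrite !normrM; apply: mulr_ile1. Qed.

Lemma C1 : Qf (phi true) (phi false) (phi false) (phi false) <= Num.sqrt U.
Proof.
apply: le_trans (@Q_scale (a * a * a) _ (fun _ _ => mu) a3 _) _.
  move=> h1 h2; rewrite /Bg /phi /= /mu -avgZ.
  by apply: eq_avg => y; ring.
by rewrite !avg_cst; exact: mu_sq.
Qed.

Lemma C2a : Qf (phi true) (phi true) (phi false) (phi false) <= Num.sqrt U.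
Proof.
apply: le_trans (@Q_scale (a * a) _ (fun h1 _ => rr h1) a2 _) _.
  move=> h1 h2; rewrite /Bg /phi /= /rr -avgZ.
  by apply: eq_avg => y; ring.
apply: le_trans U_le_sqrt; rewrite U_rr; apply: eqle.
by apply: eq_avg => h1; rewrite avg_cst.
Qed.

Lemma C2b : Qf (phi true) (phi false) (phi false) (phi true) <= Num.sqrt U.
Proof.
apply: le_trans (@Q_scale (a * a) _ (fun h1 h2 => rr (h1 + h2)) a2 _) _.
  move=> h1 h2; rewrite /Bg /phi /= /rr -avgZ.
  by apply: eq_avg => y; rewrite addrA; ring.
apply: le_trans U_le_sqrt; rewrite U_rr; apply: eqle.
rewrite -(@avg_cst R V (avg (fun z => rr z ^+ 2))); apply: eq_avg => h1.
rewrite -(avg_shift h1 (fun z => rr z ^+ 2)); apply: eq_avg => h2.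
by rewrite addrC.
Qed.

Definition t3 (h1 h2 : V) := avg (fun y => f y * f (y + h1) * f (y + h2)).

Lemma avg_mul (F G : V -> R) : avg F * avg G = avg (fun x => avg (fun y => F x * G y)).
Proof. rewrite -avgZr; apply: eq_avg => x; by rewrite avgZ. Qed.

Lemma rr_diff x y : avg (fun h => f (x + h) * f (y + h)) = rr (y - x).
Proof.
rewrite /rr -[in RHS](avg_shift x); apply: eq_avg => h.
congr (f _ * f _); first by rewrite addrC.
by rewrite -addrA (addrC x) subrK addrC.
Qed.

Lemma rr_sym z : rr (- z) = rr z.
Proof.
rewrite /rr -[in LHS](avg_shift z); apply: eq_avg => w.
by rewrite addrK mulrC.
Qed.

Lemma t3_bound : avg (fun h1 => avg (fun h2 => t3 h1 h2 ^+ 2)) <= U.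
Proof.
apply: (@le_trans _ _ (avg (fun x => avg (fun y => f x * f y * rr (y - x) ^+ 2)))).
  apply: eqle.
  transitivity (avg (fun h1 => avg (fun h2 => avg (fun x => avg (fun y =>
     f x * f y * (f (x + h1) * f (y + h1)) * (f (x + h2) * f (y + h2))))))).
    apply: eq_avg => h1; apply: eq_avg => h2; rewrite expr2 /t3 avg_mul.
    apply: eq_avg => x; apply: eq_avg => y; ring.
  under eq_avg => h1 do (under eq_avg => h2 do rewrite avg_swap; rewrite avg_swap).
  rewrite avg_swap; apply: eq_avg => x.
  under eq_avg => h1 do rewrite avg_swap.
  rewrite avg_swap; apply: eq_avg => y.
  under eq_avg => h1 do rewrite avgZ.
  under eq_avg => h1 do rewrite rr_diff.
  by rewrite avgZr avgZ rr_diff -(opprB y x) rr_sym; ring.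
rewrite U_rr -(@avg_cst R V (avg (fun z => rr z ^+ 2))); apply: avg_le => x.
rewrite -(avg_shift (- x) (fun z => rr z ^+ 2)); apply: avg_le => y.
apply: le_trans (ler_norm _) _; rewrite normrM (ger0_norm (sqr_ge0 _)).
apply: ler_piMl; first exact: sqr_ge0.
by rewrite normrM; apply: mulr_ile1.
Qed.

Lemma C3 : Qf (phi true) (phi true) (phi true) (phi false) <= Num.sqrt U.
Proof.
apply: le_trans (@Q_scale (a) _ (t3) ha _) _.
  move=> h1 h2; rewrite /Bg /phi /= /t3 -avgZ.
  by apply: eq_avg => y; ring.
exact: le_trans t3_bound U_le_sqrt.
Qed.

Ltac canon := first [exact: C1 | exact: C2a | exact: C2b | exact: C3].

Lemma KEY (t : bool -> bool -> bool) :
  (forall b1 b2, t b1 b2) \/ (forall b1 b2, t b1 b2 = false) \/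
  Qf (phi (t false false)) (phi (t true false)) (phi (t false true)) (phi (t true true))
     <= Num.sqrt U.
Proof.
case E00: (t false false); case E10: (t true false);
case E01: (t false true); case E11: (t true true);
  try (by left => - [] []); try (by right; left => - [] []); right; right;
  first [canon | rewrite Sym2; canon | rewrite Sym1; canon
        | rewrite Sym1 Sym2; canon | rewrite Sym2 Sym1; canon
        | rewrite Sym2 Sym1 Sym2; canon | rewrite Sym1 Sym2 Sym1; canon
        | rewrite Sym1 Sym2 Sym1 Sym2; canon].
Qed.

Definition Bt (t : bool -> bool -> bool) (h1 h2 : V) :=
  avg (fun y => \prod_b1 \prod_b2 phi (t b1 b2) (y + e b1 h1 + e b2 h2)).

Lemma Bt_Bg t h1 h2 : Bt t h1 h2 =
  Bg (phi (t false false)) (phi (t true false)) (phi (t false true)) (phi (t true true)) h1 h2.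
Proof. rewrite /Bt /Bg; apply: eq_avg => y; rewrite !big_bool /= !addr0; ring. Qed.

Lemma phi_le1 b y : `|phi b y| <= 1.
Proof. by case: b => /=. Qed.

Lemma Bt_le1 t h1 h2 : `|Bt t h1 h2| <= 1.
Proof.
rewrite Bt_Bg /Bg; apply: avg_le1 => y.
rewrite !normrM; do 3! (apply: mulr_ile1; rewrite ?mulr_ge0 ?normr_ge0 ?phi_le1 //).
Qed.

Lemma comb (B0 B1 : V -> V -> R) : (forall h1 h2, `|B1 h1 h2| <= 1) ->
  avg (fun h1 => avg (fun h2 => B0 h1 h2 ^+ 2)) <= Num.sqrt U ->
  `|avg (fun h1 => avg (fun h2 => B1 h1 h2 * B0 h1 h2))| <= Num.sqrt (Num.sqrt U).
Proof.
move=> hB1 hQ.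
set X := avg (fun h1 => avg (fun h2 => `|B0 h1 h2|)).
have h1 : `|avg (fun h1 => avg (fun h2 => B1 h1 h2 * B0 h1 h2))| <= X.
  apply: le_trans (avg_norm _) _; apply: avg_le => u.
  apply: le_trans (avg_norm _) _; apply: avg_le => v.
  by rewrite normrM; apply: ler_piMl.
apply: le_trans h1 _.
have X0 : 0 <= X by apply: avg_ge0 => u; apply: avg_ge0 => v.
have hX : X ^+ 2 <= Num.sqrt U.
  apply: le_trans (avg_sq _) _; apply: le_trans hQ.
  apply: avg_le => u; apply: le_trans (avg_sq _) _; apply: avg_le => v.
  by rewrite real_normK ?num_real.
rewrite -(ger0_norm X0) -sqrtr_sqr; exact: ler_wsqrtr.
Qed.

Lemma comb' (B0 B1 : V -> V -> R) : (forall h1 h2, `|B1 h1 h2| <= 1) ->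
  avg (fun h1 => avg (fun h2 => B0 h1 h2 ^+ 2)) <= Num.sqrt U ->
  `|avg (fun h1 => avg (fun h2 => B0 h1 h2 * B1 h1 h2))| <= Num.sqrt (Num.sqrt U).
Proof.
move=> h hQ; under eq_avg => h1 do under eq_avg => h2 do rewrite mulrC.
exact: comb.
Qed.

Lemma Bt_true (t : bool -> bool -> bool) : (forall b1 b2, t b1 b2) ->
  avg (fun h1 => avg (fun h2 => Bt t h1 h2)) = U.
Proof.
move=> ht; rewrite gp2E.
under eq_avg => h1 do rewrite avg_swap.
rewrite avg_swap; apply: eq_avg => y; apply: eq_avg => h1; apply: eq_avg => h2.
by apply: eq_bigr => b1 _; apply: eq_bigr => b2 _; rewrite ht.
Qed.

Lemma Bt_false (t : bool -> bool -> bool) (h1 h2 : V) : (forall b1 b2, t b1 b2 = false) ->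
  Bt t h1 h2 = a * a * (a * a).
Proof.
move=> ht; rewrite -[RHS](@avg_cst R V); apply: eq_avg => y.
by rewrite !big_bool /= !ht.
Qed.

Lemma split3 (s : bool -> bool -> bool -> bool) :
  avg (fun x => avg (fun h1 => avg (fun h2 => avg (fun h3 =>
      \prod_b3 \prod_b1 \prod_b2 phi (s b1 b2 b3) (x + e b1 h1 + e b2 h2 + e b3 h3)))))
  = avg (fun h1 => avg (fun h2 =>
      Bt (fun b1 b2 => s b1 b2 true) h1 h2 * Bt (fun b1 b2 => s b1 b2 false) h1 h2)).
Proof.
pose Pc c y h1 h2 := \prod_b1 \prod_b2 phi (s b1 b2 c) (y + e b1 h1 + e b2 h2).
transitivity (avg (fun x => avg (fun h1 => avg (fun h2 => avg (fun h3 =>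
      Pc true (h3 + x) h1 h2 * Pc false x h1 h2))))).
  apply: eq_avg => x; apply: eq_avg => h1; apply: eq_avg => h2; apply: eq_avg => h3.
  rewrite big_bool /=; congr (_ * _).
    apply: eq_bigr => b1 _; apply: eq_bigr => b2 _.
    by congr (phi _ _); rewrite [LHS]addrC !addrA.
  by apply: eq_bigr => b1 _; apply: eq_bigr => b2 _; rewrite addr0.
rewrite avg_swap; apply: eq_avg => h1.
rewrite avg_swap; apply: eq_avg => h2.
rewrite mulrC -avgZr; apply: eq_avg => x.
rewrite avgZr mulrC; congr (_ * _).
by rewrite (avg_shift x (fun y => Pc true y h1 h2)).
Qed.

Lemma U_le_ss : U <= Num.sqrt (Num.sqrt U).
Proof. exact: le_trans U_le_sqrt (ler_wsqrtr U_le_sqrt). Qed.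

Lemma a4 : `|a * a * (a * a)| <= 1.
Proof. by rewrite !normrM; do 2! (apply: mulr_ile1; rewrite ?mulr_ge0 //). Qed.

Lemma triple_bound (s : bool -> bool -> bool -> bool) :
  (exists b1 b2 b3, s b1 b2 b3 = false) -> (exists b1 b2 b3, s b1 b2 b3) ->
  `| avg (fun x => avg (fun h1 => avg (fun h2 => avg (fun h3 =>
      \prod_b3 \prod_b1 \prod_b2 phi (s b1 b2 b3) (x + e b1 h1 + e b2 h2 + e b3 h3))))) |
  <= Num.sqrt (Num.sqrt U).
Proof.
move=> [c1 [c2 [c3 hF]]] [d1 [d2 [d3 hT]]].
rewrite split3.
set t1 := fun b1 b2 => s b1 b2 true.
set t0 := fun b1 b2 => s b1 b2 false.
have [K0|[K0|K0]] := KEY t0.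
- have [K1|[K1|K1]] := KEY t1.
  + by move: hF; case: c3; [rewrite -/(t1 c1 c2) K1 | rewrite -/(t0 c1 c2) K0].
  + under eq_avg => h1 do under eq_avg => h2 do rewrite (Bt_false t1 h1 h2 K1).
    under eq_avg => h1 do rewrite avgZ.
    rewrite avgZ Bt_true // normrM (ger0_norm U_ge0); apply: le_trans U_le_ss.
    by rewrite mulrC ler_piMr ?U_ge0 ?a4.
  + apply: comb'; first by move=> *; exact: Bt_le1.
    under eq_avg => h1 do under eq_avg => h2 do rewrite Bt_Bg.
    exact: K1.
- have [K1|[K1|K1]] := KEY t1.
  + under eq_avg => h1 do under eq_avg => h2 do rewrite (Bt_false t0 h1 h2 K0).
    under eq_avg => h1 do rewrite avgZr.
    rewrite avgZr Bt_true // normrM (ger0_norm U_ge0); apply: le_trans U_le_ss.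
    by rewrite ler_piMr ?U_ge0 ?a4.
  + by move: hT; case: d3; [rewrite -/(t1 d1 d2) K1 | rewrite -/(t0 d1 d2) K0].
  + apply: comb'; first by move=> *; exact: Bt_le1.
    under eq_avg => h1 do under eq_avg => h2 do rewrite Bt_Bg.
    exact: K1.
- apply: comb; first by move=> *; exact: Bt_le1.
  under eq_avg => h1 do under eq_avg => h2 do rewrite Bt_Bg.
  exact: K0.
Qed.

End C.

Section Fin.
Variable R : realType.
Variables p n : nat.
Local Notation V := 'rV['F_p]_n.
Local Notation Wt := {ffun 'I_3 -> bool}.

Definition TT (f : V -> R) (a : R) (S : {ffun Wt -> bool}) : R :=
  (\sum_x \sum_(h : {ffun 'I_3 -> V}) \prod_(w : Wt)
      phi R p n f a (S w) (x + \sum_(i < 3) (if w i then h i else 0))) / (#|{: V}|%:R ^+ 4).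

Lemma expand (f g : V -> R) (a : R) : (forall x, g x = a + f x) ->
  gowers_pow 3 g = \sum_S TT f a S.
Proof.
move=> hg; rewrite /gowers_pow /TT -mulr_suml; congr (_ / _).
transitivity (\sum_x \sum_(h : {ffun 'I_3 -> V}) \sum_(S : {ffun Wt -> bool}) \prod_(w : Wt)
      phi R p n f a (S w) (x + \sum_(i < 3) (if w i then h i else 0))).
  apply: eq_bigr => x _; apply: eq_bigr => h _.
  rewrite -(bigA_distr_bigA (fun (w : Wt) (b : bool) =>
      phi R p n f a b (x + \sum_(i < 3) (if w i then h i else 0)))).
  by apply: eq_bigr => w _; rewrite big_bool /= hg addrC.
under eq_bigr do rewrite exchange_big.
by rewrite exchange_big.
Qed.

Lemma TT_true f a : TT f a [ffun => true] = gowers_pow 3 f.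
Proof.
rewrite /TT /gowers_pow; congr (_ / _); apply: eq_bigr => x _; apply: eq_bigr => h _.
by apply: eq_bigr => w _; rewrite ffunE.
Qed.

Lemma TT_avg f a S : TT f a S = avg (fun x => avg (fun h1 => avg (fun h2 => avg (fun h3 =>
      \prod_b3 \prod_b1 \prod_b2 phi R p n f a (S (mk3 b1 b2 b3)) (x + e b1 h1 + e b2 h2 + e b3 h3))))).
Proof. exact: (gp3E R p n (fun w => phi R p n f a (S w))). Qed.

Lemma TT_false f a : TT f a [ffun => false] = a ^+ 8.
Proof.
rewrite TT_avg -[RHS](@avg_cst R V); apply: eq_avg => x.
rewrite -[RHS](@avg_cst R V); apply: eq_avg => h1.
rewrite -[RHS](@avg_cst R V); apply: eq_avg => h2.
rewrite -[RHS](@avg_cst R V); apply: eq_avg => h3.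
rewrite !big_bool !ffunE /=; ring.
Qed.
Lemma ex_false (S : {ffun Wt -> bool}) : S != [ffun => true] ->
  exists b1 b2 b3, S (mk3 b1 b2 b3) = false.
Proof.
move=> hS; case: (boolP [forall w, S w]) => H.
  move: hS; rewrite (_ : S = [ffun => true]) ?eqxx //.
  by apply/ffunP => w; rewrite ffunE (forallP H w).
move/forallPn: H => [w Hw]; exists (w o0), (w o1), (w o2).
by rewrite mk3_eta; exact: negbTE.
Qed.

Lemma ex_true (S : {ffun Wt -> bool}) : S != [ffun => false] ->
  exists b1 b2 b3, S (mk3 b1 b2 b3).
Proof.
move=> hS; case: (boolP [forall w, ~~ S w]) => H.
  move: hS; rewrite (_ : S = [ffun => false]) ?eqxx //.
  by apply/ffunP => w; rewrite ffunE; apply/negbTE; exact: (forallP H w).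
move/forallPn: H => [w Hw]; exists (w o0), (w o1), (w o2).
by rewrite mk3_eta; move/negPn: Hw.
Qed.
End Fin.
Arguments expand {R p n f g a}.

Theorem theorem4p1 (R : realType) (p : nat) (hp : prime p) (hodd : odd p) :
  forall eps : R, 0 < eps ->
  exists c : R, 0 < c /\
    forall (n : nat) (f : 'rV['F_p]_n -> R) (a : R) (g : 'rV['F_p]_n -> R),
      (forall x, -1 <= f x <= 1) ->
      gowers_U2 f <= c ->
      -1 <= a <= 1 ->
      (forall x, g x = a + f x) ->
      `| gowers_pow 3 g - (a ^+ 8 + gowers_pow 3 f) | <= eps.
Proof.
move=> eps heps.
have h256 : (256%:R : R) != 0 by rewrite pnatr_eq0.
have c0 : 0 < eps / 256%:R by rewrite divr_gt0 // ltr0n.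
exists (eps / 256%:R); split => //.
move=> n f a g hf1 hU ha1 hg.
have hf : forall x, `|f x| <= 1 by move=> x; rewrite ler_norml hf1.
have ha : `|a| <= 1 by rewrite ler_norml.
have hne : [ffun => false] != [ffun => true] :> {ffun {ffun 'I_3 -> bool} -> bool}.
  apply/eqP => /(congr1 (fun S : {ffun {ffun 'I_3 -> bool} -> bool} => S (mk3 false false false))).
  by rewrite !ffunE.
rewrite (expand hg) (bigD1 [ffun => true]) //= (bigD1 [ffun => false]) /=; last by [].
rewrite TT_true TT_false.
rewrite (_ : forall X Y Z : R, X + (Y + Z) - (Y + X) = Z); last by move=> X Y Z; ring.
apply: le_trans (ler_norm_sum _ _ _) _.
apply: le_trans (@ler_sum R _ _ _ _ (fun _ => eps / 256%:R) _) _.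
  move=> S /andP [h1 h2].
  rewrite TT_avg; apply: le_trans _ hU.
  exact: (@triple_bound _ _ _ f hf a ha (fun b1 b2 b3 => S (mk3 b1 b2 b3)) (ex_false _ h1) (ex_true _ h2)).
rewrite sumr_const; set k := #|_|; rewrite -[_ *+ k]mulr_natr.
apply: le_trans (_ : eps / 256%:R * 256%:R <= eps); last by rewrite divfK.
rewrite ler_wpM2l ?(ltW c0) // ler_nat.
apply: leq_trans (max_card _) _.
by rewrite card_ffun card_bool card_ffun card_bool card_ord.
Qed.
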